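(* Let $\vec f=(f_1,\dots,f_n)$ be a profile of acknowledgement-based protocols. The following are equivalent: (i) $\vec f$ is an equilibrium; (ii) for every player $i\in[n]$: (a) $C_i^{(\vec f_{-i},g_i)}(h_0)=C_i^{(\vec f_{-i},r_i)}(h_0)=C_i^{\vec f}(h_0)$ for all $g_i,r_i\in\mathcal G_i^{\vec f}$, and (b) $C_i^{(\vec f_{-i},g_i)}(h_0)\le C_i^{(\vec f_{-i},r_i)}(h_0)$ for all $g_i\in\mathcal G_i^{\vec f}$ and all protocols $r_i\notin\mathcal G_i^{\vec f}$ of player $i$.
   Context: Contention game: $n$ players, channels $K=\{1,\dots,k\}$, slots $t=1,2,\dots$; each player has one packet, initially pending; in each slot a pending player chooses (possibly randomly) an action in $A=\{0,1,\dots,k\}$ ($0$ = idle, $a$ = transmit on channel $a$); a lone transmitter on a channel succeeds and leaves, colliding transmitters remain pending. $X_{i,t}$ is player $i$'s action at slot $t$, $h_{i,t}$ her personal history. Acknowledgement-based protocols: decision rules depend only on $h_{i,t-1}$; only transmitting players learn whether they succeeded. $T_i$ is player $i$'s latency and $C_i^{\vec g}(h_0)=\mathbb E[T_i\mid\vec g]$ her unconditional expected latency under profile $\vec g$; $(\vec f_{-i},g_i)$ is $\vec f$ with $f_i$ replaced by $g_i$. $\vec f$ is an equilibrium if for every $i$, slot $t$ and history, player $i$ cannot decrease her conditional expected latency by unilaterally deviating after $t$. For $\tau^*\ge1$ and $h_{i,\tau^*}=(a_{i,1},\dots,a_{i,\tau^*})$, $g_i(h_{i,\tau^*})$ plays $a_{i,t}$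 with probability $1$ for $1\le t\le\tau^*$ and follows $f_{i,t}$ for $t>\tau^*$. $h_{i,\tau^*}$ is consistent with $\vec f$ if it occurs for player $i$ with positive probability under $\vec f$; $\mathcal G_i^{\vec f}$ is the set of all $g_i(h_{i,\tau^*})$, $\tau^*\ge1$, with $h_{i,\tau^*}$ consistent with $\vec f$. *)

(* Defs.v *)
From mathcomp Require Import all_boot all_order all_algebra.
From mathcomp Require Import boolp classical_sets reals constructive_ereal ereal topology normedtype sequences.
Set Implicit Arguments. Unset Strict Implicit. Unset Printing Implicit Defensive.
Import Order.TTheory GRing.Theory Num.Theory.
Local Open Scope ring_scope.

(* Actions: 'I_k.+1, with ord0 = idle and j (1 <= j <= k) = transmit on channel j. *)

(* An acknowledgement-based protocol (decision rules): given the list of the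
   player's own past actions h = (a_1,...,a_{t-1}) (while pending, this is her
   whole personal history: all past transmissions failed), the distribution
   f h : action -> probability of the action at slot t = size h + 1. *)
Definition prot (R : realType) (k : nat) := seq 'I_k.+1 -> 'I_k.+1 -> R.

Definition valid_prot (R : realType) (k : nat) (p : prot R k) : Prop :=
  forall h : seq 'I_k.+1, (forall a, 0 <= p h a) /\ \sum_(a < k.+1) p h a = 1.

Section Game.
Variables (R : realType) (n k : nat).

(* A joint action record over the first m slots (slots are 0-indexed here:
   slot s below is slot s+1 of the paper).  After a player has left, her
   recorded actions are forced to be idle (ord0) by the weight. *)
Definition traj (m : nat) := {ffun 'I_n -> m.-tuple 'I_k.+1}.

Definition act m (w : traj m) (i : 'I_n) (s : nat) : 'I_k.+1 := nth ord0 (w i) s.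

Definition succ m (w : traj m) (i : 'I_n) (s : nat) : bool :=
  (act w i s != ord0) && [forall j : 'I_n, (j != i) ==> (act w j s != act w i s)].

Definition pendb m (w : traj m) (i : 'I_n) (s : nat) : bool :=
  [forall s' : 'I_m, (s' < s)%N ==> ~~ succ w i s'].

Definition weight (F : 'I_n -> prot R k) m (w : traj m) : R :=
  \prod_(s < m) \prod_(j < n)
     (if pendb w j s then F j (take s (w j)) (act w j s)
      else ((act w j s == ord0)%:R : R)).

Definition Pr (F : 'I_n -> prot R k) m (E : pred (traj m)) : R :=
  \sum_(w : traj m | E w) weight F w.

Definition upd (F : 'I_n -> prot R k) (i : 'I_n) (g : prot R k) : 'I_n -> prot R k :=
  fun j => if j == i then g else F j.

(* unconditional expected latency C_i^F(h_0) = E[T_i] = sum_{t>=0} P(T_i > t)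
   (valued in the extended reals; T_i may be infinite) *)
Definition cost (F : 'I_n -> prot R k) (i : 'I_n) : \bar R :=
  (\sum_(0 <= t <oo) (Pr F (fun w : traj t => pendb w i t))%:E)%E.

(* probability of the history a = (a_1..a_t) of player i with i still pending
   after slot t (the conditioning event of the equilibrium definition) *)
Definition Pr_hist (F : 'I_n -> prot R k) (i : 'I_n) (a : seq 'I_k.+1) : R :=
  Pr F (fun w : traj (size a) => pendb w i (size a) && (val (w i) == a)).

(* P(T_i > s and history a pending):  the event is
   {T_i > max(s, t), first t actions of i = a}. *)
Definition Pr_tail_hist (F : 'I_n -> prot R k) (i : 'I_n) (a : seq 'I_k.+1) (s : nat) : R :=
  Pr F (fun w : traj (maxn s (size a)) =>
          pendb w i (maxn s (size a)) && (take (size a) (w i) == a)).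

(* conditional expected latency E[T_i | history a] = E[T_i 1_E] / P(E) *)
Definition condcost (F : 'I_n -> prot R k) (i : 'I_n) (a : seq 'I_k.+1) : \bar R :=
  ((Pr_hist F i a)^-1)%:E *
  (\sum_(0 <= s <oo) (Pr_tail_hist F i a s)%:E)%E.

Definition equilibrium (F : 'I_n -> prot R k) : Prop :=
  forall (i : 'I_n) (a : seq 'I_k.+1), 0 < Pr_hist F i a ->
  forall g : prot R k, valid_prot g ->
    (forall h, (size h < size a)%N -> g h = F i h) ->
    (condcost F i a <= condcost (upd F i g) i a)%E.

Definition consistent (F : 'I_n -> prot R k) (i : 'I_n) (h : seq 'I_k.+1) : Prop :=
  0 < Pr F (fun w : traj (size h) => pendb w i (size h).-1 && (val (w i) == h)).

Definition gdev (f : prot R k) (h : seq 'I_k.+1) : prot R k :=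
  fun h' => if (size h' < size h)%N
            then (fun a => ((a == nth ord0 h (size h')) %:R : R))
            else f h'.

Definition inG (F : 'I_n -> prot R k) (i : 'I_n) (g : prot R k) : Prop :=
  exists h : seq 'I_k.+1, (0 < size h)%N /\ consistent F i h /\ g = gdev (F i) h.

End Game.

(* Main.v *)
Require Import Defs.
From mathcomp Require Import all_boot all_order all_algebra.
From mathcomp Require Import boolp classical_sets reals constructive_ereal ereal topology normedtype sequences.
From mathcomp Require Import lra.
Import Order.TTheory GRing.Theory Num.Theory.
Local Open Scope ring_scope.
Set Implicit Arguments. Unset Strict Implicit. Unset Printing Implicit Defensive.

Section Aux.
Variables (R : realType) (n k : nat).
Local Notation T m := (traj n k m).
Local Notation P := (prot R k).
Implicit Types (F G : 'I_n -> prot R k) (g : prot R k).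

Definition nnprot (g : P) := forall h a, 0 <= g h a.

Lemma valid_nn (g : P) : valid_prot g -> nnprot g.
Proof. by move=> H h a; case: (H h) => /(_ a). Qed.

Lemma pend_le m (w : T m) i s1 s0 : (s0 <= s1)%N -> pendb w i s1 -> pendb w i s0.
Proof.
move=> le /forallP H; apply/forallP => s'; apply/implyP => lt.
exact: (implyP (H s') (leq_trans lt le)).
Qed.

Definition pfac (g : P) m (w : T m) i (s : nat) : R :=
  if pendb w i s then g (take s (w i)) (act w i s) else ((act w i s == ord0)%:R).

Definition Pi (g : P) m (w : T m) i : R := \prod_(s < m) pfac g w i s.

Definition Rest (F : 'I_n -> P) m (w : T m) i : R :=
  \prod_(s < m) \prod_(j < n | j != i) pfac (F j) w j s.

Lemma weight_upd F i g m (w : T m) : weight (upd F i g) w = Rest F w i * Pi g w i.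
Proof.
rewrite /weight /Rest /Pi -big_split /=; apply: eq_bigr => s _.
rewrite (bigD1 i) //= mulrC /upd eqxx; congr (_ * _).
by apply: eq_bigr => j /negbTE ->.
Qed.

Lemma upd_id F i : upd F i (F i) = F.
Proof. by apply/funext => j; rewrite /upd; case: eqP => // ->. Qed.

Lemma gdev_nil (g : P) : gdev g [::] = g.
Proof. by apply/funext => h; rewrite /gdev ltn0. Qed.

Lemma nn_upd F i g : (forall j, nnprot (F j)) -> nnprot g -> forall j, nnprot (upd F i g j).
Proof. by move=> HF hg j; rewrite /upd; case: eqP. Qed.

Lemma nn_gdev (g : P) a : nnprot g -> nnprot (gdev g a).
Proof. by move=> hg h b; rewrite /gdev; case: ifP => _ //; exact: ler0n. Qed.

Lemma valid_gdev (g : P) a : valid_prot g -> valid_prot (gdev g a).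
Proof.
move=> hg h; split; first by move=> b; apply: (nn_gdev a (valid_nn hg)).
rewrite /gdev; case: ifP => _; last by case: (hg h).
by rewrite (bigD1 (nth ord0 a (size h))) //= eqxx big1 ?addr0 // => b /negbTE ->.
Qed.

Lemma weight_ge0 G m (w : T m) : (forall j, nnprot (G j)) -> 0 <= weight G w.
Proof.
move=> H; apply: prodr_ge0 => s _; apply: prodr_ge0 => j _.
by case: ifP => _; [exact: H | exact: ler0n].
Qed.

Lemma Pr_ge0 G m (E : pred (T m)) : (forall j, nnprot (G j)) -> 0 <= Pr G E.
Proof. by move=> H; apply: sumr_ge0 => w _; exact: weight_ge0. Qed.

Lemma Pr_mono G m (E1 E2 : pred (T m)) : (forall j, nnprot (G j)) ->
  (forall w, E1 w -> E2 w) -> Pr G E1 <= Pr G E2.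
Proof.
move=> H H12; rewrite /Pr [X in X <= _]big_mkcond [X in _ <= X]big_mkcond /=.
apply: ler_sum => w _; case E1w: (E1 w); first by rewrite H12.
by case: (E2 w) => //; exact: weight_ge0.
Qed.

Lemma Pr_ge_weight G m (E : pred (T m)) w : (forall j, nnprot (G j)) -> E w ->
  weight G w <= Pr G E.
Proof.
move=> H Ew; rewrite /Pr (bigD1 w) //= lerDl; apply: sumr_ge0 => ? _.
exact: weight_ge0.
Qed.

Lemma Pr_pos_ex G m (E : pred (T m)) : 0 < Pr G E -> exists w, E w /\ 0 < weight G w.
Proof.
move=> H; case: (pselect (exists w, E w /\ 0 < weight G w)) => // Hn; exfalso.
suff: Pr G E <= 0 by rewrite leNgt H.
rewrite /Pr; apply: (@le_trans _ _ (\sum_(w | E w) (0:R))); last by rewrite big1.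
apply: ler_sum => w Ew; rewrite leNgt; apply/negP => hw; apply: Hn; by exists w.
Qed.

Lemma weight_agree (G1 G2 : 'I_n -> P) m (w : T m) :
  (forall j h, (size h < m)%N -> G1 j h = G2 j h) -> weight G1 w = weight G2 w.
Proof.
move=> H; apply: eq_bigr => s _; apply: eq_bigr => j _; case: ifP => // _.
by rewrite H // size_take size_tuple ltn_ord.
Qed.


Definition pp g (a : seq 'I_k.+1) : R := \prod_(s < size a) g (take s a) (nth ord0 a s).

Lemma pfac_gdev_lt g a m (w : T m) i s : (s < m)%N -> (s < size a)%N -> pendb w i s ->
  pfac (gdev g a) w i s = (act w i s == nth ord0 a s)%:R.
Proof. by move=> hm ha hp; rewrite /pfac hp /gdev size_take size_tuple hm ha. Qed.

Lemma pfac_gdev_ge g a m (w : T m) i s : (s < m)%N -> (size a <= s)%N ->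
  pfac (gdev g a) w i s = pfac g w i s.
Proof. by move=> hm ha; rewrite /pfac /gdev size_take size_tuple hm ltnNge ha. Qed.

Lemma Pi_gdev g a m (w : T m) i : (size a <= m)%N -> pendb w i m ->
  take (size a) (w i) = a -> Pi g w i = pp g a * Pi (gdev g a) w i.
Proof.
move=> hm hp ht.
have -> : pp g a = \prod_(s < m) (if (s < size a)%N then g (take s a) (nth ord0 a s) else 1).
  by rewrite /pp (big_ord_widen m (fun s => g (take s a) (nth ord0 a s))) // big_mkcond.
rewrite /Pi -big_split /=; apply: eq_bigr => s _.
have hps : pendb w i s by apply: pend_le hp; exact: ltnW.
case: ltnP => hs.
- rewrite pfac_gdev_lt //.
  have e1 : act w i s = nth ord0 a s by rewrite /act -ht nth_take.
  have e2 : take s (w i) = take s a by rewrite -ht take_takel // ltnW.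
  by rewrite e1 eqxx mulr1 /pfac hps e1 e2.
- by rewrite pfac_gdev_ge // mul1r.
Qed.

Lemma take_neq (a : seq 'I_k.+1) m (w : T m) i : (size a <= m)%N ->
  take (size a) (w i) != a -> exists s, (s < size a)%N /\ act w i s != nth ord0 a s.
Proof.
move=> hm hn.
case: (pselect (exists s, (s < size a)%N /\ act w i s != nth ord0 a s)) => // Hn.
exfalso; move/eqP: hn; apply.
have hsz : size (take (size a) (w i)) = size a by rewrite size_takel // size_tuple.
apply: (@eq_from_nth _ ord0); first by [].
move=> s; rewrite hsz => hs; rewrite nth_take //.
case: (eqVneq (nth ord0 (w i) s) (nth ord0 a s)) => // hne; exfalso; apply: Hn.
by exists s.
Qed.

Lemma Pi_zero g a m (w : T m) i s : (s < m)%N -> (s < size a)%N -> pendb w i s ->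
  act w i s != nth ord0 a s -> Pi (gdev g a) w i = 0.
Proof.
by move=> hm ha hp hn; rewrite /Pi (bigD1 (Ordinal hm)) //= pfac_gdev_lt // (negbTE hn) mul0r.
Qed.

Lemma Pi_zero2 g a m (w : T m) i : (size a <= m)%N -> pendb w i m ->
  take (size a) (w i) != a -> Pi (gdev g a) w i = 0.
Proof.
move=> hm hp hn; have [s [hs hne]] := take_neq hm hn.
apply: (@Pi_zero _ _ _ _ _ s) => //; first exact: leq_trans hs hm.
apply: pend_le hp; exact: ltnW (leq_trans hs hm).
Qed.

Lemma Pi_mix f h m (w : T m) i : \sum_(b < k.+1) f h b = 1 ->
  Pi (gdev f h) w i = \sum_(b < k.+1) f h b * Pi (gdev f (rcons h b)) w i.
Proof.
move=> Hs.
have Heq b s : (s < m)%N -> s != size h ->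
    pfac (gdev f h) w i s = pfac (gdev f (rcons h b)) w i s.
  move=> hm hne; case: (ltnP s (size h)) => hs.
  - rewrite /pfac; case: ifP => hp //.
    by rewrite /gdev size_take size_tuple hm size_rcons hs ltnS ltnW // nth_rcons hs.
  - have hs' : (size h < s)%N by rewrite ltn_neqAle eq_sym hne hs.
    by rewrite !pfac_gdev_ge // size_rcons.
case: (ltnP (size h) m) => htau; last first.
  transitivity (\sum_(b < k.+1) f h b * Pi (gdev f h) w i).
    by rewrite -mulr_suml Hs mul1r.
  apply: eq_bigr => b _; congr (_ * _).
  rewrite /Pi; apply: eq_bigr => s' _; apply: Heq => //.
  by rewrite neq_ltn (leq_trans (ltn_ord s') htau).
set Y := \prod_(s < m | s != Ordinal htau) pfac (gdev f h) w i s.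
have HY b : Pi (gdev f (rcons h b)) w i = pfac (gdev f (rcons h b)) w i (Ordinal htau) * Y.
  rewrite /Pi (bigD1 (Ordinal htau)) //=; congr (_ * _).
  by apply: eq_bigr => s hs; rewrite (Heq b).
rewrite (eq_bigr (fun b => f h b * (pfac (gdev f (rcons h b)) w i (Ordinal htau) * Y)));
  last by move=> b _; rewrite HY.
rewrite /Pi (bigD1 (Ordinal htau)) //= -/Y.
case hp: (pendb w i (size h)); last first.
  by rewrite /pfac hp -mulr_suml Hs mul1r.
rewrite (bigD1 (act w i (size h))) //= big1 ?addr0; last first.
  move=> b hb; rewrite /pfac hp /gdev size_take size_tuple htau size_rcons ltnSn.
  by rewrite nth_rcons ltnn eqxx eq_sym (negbTE hb) mul0r mulr0.
rewrite /pfac hp /gdev size_take size_tuple htau size_rcons ltnSn ltnn.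
rewrite nth_rcons ltnn !eqxx mul1r.
case: (eqVneq (take (size h) (w i)) h) => [-> //|hn].
have [s [hs hne]] := take_neq (ltnW htau) hn.
suff -> : Y = 0 by rewrite !mulr0.
rewrite /Y (bigD1 (Ordinal (ltn_trans hs htau))) /=; last by rewrite neq_ltn hs.
rewrite pfac_gdev_lt // ?(negbTE hne) ?mul0r //; first exact: ltn_trans hs htau.
apply: pend_le hp; exact: ltnW.
Qed.


Lemma pp_ge0 g a : nnprot g -> 0 <= pp g a.
Proof. by move=> hg; apply: prodr_ge0 => s _; exact: hg. Qed.

Lemma pp_rcons g h b : pp g (rcons h b) = pp g h * g h b.
Proof.
rewrite /pp size_rcons big_ord_recr /=; congr (_ * _).
  apply: eq_bigr => s _ /=; rewrite nth_rcons ltn_ord -cats1 takel_cat //.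
  exact: ltnW.
by rewrite nth_rcons ltnn eqxx -cats1 takel_cat // take_size.
Qed.

Lemma Pr_upd F i g m (E : pred (T m)) :
  Pr (upd F i g) E = \sum_(w | E w) Rest F w i * Pi g w i.
Proof. by apply: eq_bigr => w _; rewrite weight_upd. Qed.

Lemma Pr_hist_nil F i : Pr_hist F i [::] = 1.
Proof.
rewrite /Pr_hist /Pr /=.
transitivity (\sum_(w : T 0) (1:R)).
  apply: eq_big => w.
    have -> : pendb w i 0 by apply/forallP => -[].
    by rewrite (tuple0 (w i)).
  by rewrite /weight big_ord0.
by rewrite sumr_const /traj card_ffun card_tuple expn0 exp1n.
Qed.

Lemma condcost_nil F i : condcost F i [::] = cost F i.
Proof.
rewrite /condcost Pr_hist_nil invr1 mul1e /cost; apply: eq_eseriesr => s _.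
congr (_%:E); rewrite /Pr_tail_hist /Pr /=; apply: eq_bigl => w.
by rewrite take0 eqxx andbT.
Qed.


Lemma cost_mix F i f h : (forall j, nnprot (F j)) -> valid_prot f ->
  cost (upd F i (gdev f h)) i =
  (\sum_(b < k.+1) (f h b)%:E * cost (upd F i (gdev f (rcons h b))) i)%E.
Proof.
move=> HF hf.
have hs : \sum_(b < k.+1) f h b = 1 by case: (hf h).
have nnu b : forall j, nnprot (upd F i (gdev f (rcons h b)) j).
  exact: nn_upd HF (nn_gdev _ (valid_nn hf)).
rewrite /cost.
transitivity (\sum_(0 <= t <oo) \sum_(b < k.+1)
   ((f h b)%:E * (Pr (upd F i (gdev f (rcons h b))) (fun w : T t => pendb w i t))%:E))%E.
  apply: eq_eseriesr => t _.
  under eq_bigr do rewrite -EFinM.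
  rewrite sumEFin; congr (_%:E).
  rewrite Pr_upd.
  under eq_bigr do rewrite (Pi_mix _ _ hs) mulr_sumr.
  rewrite exchange_big /=; apply: eq_bigr => b _.
  rewrite Pr_upd mulr_sumr; apply: eq_bigr => w _.
  by rewrite mulrCA.
rewrite nneseries_sum; last first.
  by move=> b t _; rewrite mule_ge0 // lee_fin ?(valid_nn hf) ?Pr_ge0.
apply: eq_bigr => b _; rewrite nneseriesZl //.
by move=> t _; rewrite lee_fin Pr_ge0.
Qed.


Lemma tail_gdev F i g a s : Pr_tail_hist (upd F i g) i a s =
  pp g a * Pr_tail_hist (upd F i (gdev g a)) i a s.
Proof.
rewrite /Pr_tail_hist !Pr_upd mulr_sumr; apply: eq_bigr => w /andP[hp /eqP ht].
by rewrite (Pi_gdev g (leq_maxr _ _) hp ht) mulrCA.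
Qed.

Lemma hist_agree F i g a : (forall h, (size h < size a)%N -> g h = F i h) ->
  Pr_hist (upd F i g) i a = Pr_hist F i a.
Proof.
move=> H; apply: eq_bigr => w _; apply: weight_agree => j h hh.
by rewrite /upd; case: eqP => // ->; exact: H.
Qed.

Lemma pp_agree F i g a : (forall h, (size h < size a)%N -> g h = F i h) ->
  pp g a = pp (F i) a.
Proof.
move=> H; apply: eq_bigr => s _; rewrite H // size_takel //; exact: ltnW.
Qed.

Definition Ssum F i a : \bar R := (\sum_(0 <= s <oo) (Pr_tail_hist F i a s)%:E)%E.

Lemma condcost_rep F i g a : (forall j, nnprot (F j)) -> nnprot g ->
  condcost (upd F i g) i a =
  (((Pr_hist (upd F i g) i a)^-1 * pp g a)%:E * Ssum (upd F i (gdev g a)) i a)%E.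
Proof.
move=> HF hg; rewrite /condcost /Ssum.
under eq_eseriesr => s _ do rewrite tail_gdev EFinM.
rewrite nneseriesZl; first by rewrite EFinM muleA.
move=> s _; rewrite lee_fin; apply: Pr_ge0; apply: nn_upd => //.
exact: nn_gdev.
Qed.

Lemma tail_eq_pend F i x a s : (size a <= s)%N ->
  Pr_tail_hist (upd F i (gdev x a)) i a s =
  Pr (upd F i (gdev x a)) (fun w : T s => pendb w i s).
Proof.
move=> hs.
have gen M : (size a <= M)%N ->
    Pr (upd F i (gdev x a)) (fun w : T M => pendb w i M && (take (size a) (w i) == a)) =
    Pr (upd F i (gdev x a)) (fun w : T M => pendb w i M).
  move=> hM; rewrite /Pr [LHS]big_mkcond [RHS]big_mkcond; apply: eq_bigr => w _.
  case hp: (pendb w i M) => //=; case: eqP => // /eqP hn.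
  by rewrite weight_upd Pi_zero2 ?mulr0.
rewrite /Pr_tail_hist gen ?leq_maxr //.
by rewrite (maxn_idPl hs).
Qed.

Lemma tail_small F i x y a s : (s < size a)%N ->
  Pr_tail_hist (upd F i (gdev x a)) i a s = Pr_tail_hist (upd F i (gdev y a)) i a s.
Proof.
move=> hs; apply: eq_bigr => w _; apply: weight_agree => j h hh.
rewrite /upd; case: eqP => // _.
by rewrite (maxn_idPr (ltnW hs)) in hh; rewrite /gdev hh.
Qed.

Lemma pend_small F i x y a t : (t < size a)%N ->
  Pr (upd F i (gdev x a)) (fun w : T t => pendb w i t) =
  Pr (upd F i (gdev y a)) (fun w : T t => pendb w i t).
Proof.
move=> hs; apply: eq_bigr => w _; apply: weight_agree => j h hh.
by rewrite /upd; case: eqP => // _; rewrite /gdev (ltn_trans hh hs).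
Qed.


Lemma series_split (f : nat -> R) N : (forall t, 0 <= f t) ->
  (\sum_(0 <= t <oo) (f t)%:E =
   \sum_(0 <= t < N) (f t)%:E + \sum_(0 <= t <oo) (f (t + N)%N)%:E)%E.
Proof.
move=> f0; rewrite (@nneseries_split _ (fun t => (f t)%:E) 0 N); last first.
  by move=> t _; rewrite lee_fin.
rewrite add0n; congr (_ + _)%E.
by rewrite -(@nneseries_addn _ (fun t => (f t)%:E)) // => t; rewrite lee_fin.
Qed.

Lemma series_cmp (u1 u2 v1 v2 : nat -> R) N :
  (forall t, 0 <= u1 t) -> (forall t, 0 <= u2 t) ->
  (forall t, 0 <= v1 t) -> (forall t, 0 <= v2 t) ->
  (forall t, (t < N)%N -> u1 t = u2 t) -> (forall t, (t < N)%N -> v1 t = v2 t) ->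
  (forall t, (N <= t)%N -> u1 t = v1 t) -> (forall t, (N <= t)%N -> u2 t = v2 t) ->
  (\sum_(0 <= t <oo) (v1 t)%:E <= \sum_(0 <= t <oo) (v2 t)%:E)%E ->
  (\sum_(0 <= t <oo) (u1 t)%:E <= \sum_(0 <= t <oo) (u2 t)%:E)%E.
Proof.
move=> hu1 hu2 hv1 hv2 eu ev e1 e2 Hv.
rewrite (series_split N hv1) (series_split N hv2) in Hv.
rewrite (series_split N hu1) (series_split N hu2).
have eA : (\sum_(0 <= t < N) (u1 t)%:E = \sum_(0 <= t < N) (u2 t)%:E)%E.
  by apply: eq_big_nat => t /andP[_ ht]; rewrite eu.
have eB : (\sum_(0 <= t < N) (v1 t)%:E = \sum_(0 <= t < N) (v2 t)%:E)%E.
  by apply: eq_big_nat => t /andP[_ ht]; rewrite ev.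
have eT1 : (\sum_(0 <= t <oo) (u1 (t + N)%N)%:E = \sum_(0 <= t <oo) (v1 (t + N)%N)%:E)%E.
  by apply: eq_eseriesr => t _; rewrite e1 // leq_addl.
have eT2 : (\sum_(0 <= t <oo) (u2 (t + N)%N)%:E = \sum_(0 <= t <oo) (v2 (t + N)%N)%:E)%E.
  by apply: eq_eseriesr => t _; rewrite e2 // leq_addl.
rewrite eA eT1 eT2; rewrite eB in Hv; apply: leeD2l.
by move: Hv; rewrite leeD2lE // sumEFin.
Qed.

Lemma S_cost F i a x y : (forall j, nnprot (F j)) -> nnprot x -> nnprot y ->
  (cost (upd F i (gdev x a)) i <= cost (upd F i (gdev y a)) i)%E ->
  (Ssum (upd F i (gdev x a)) i a <= Ssum (upd F i (gdev y a)) i a)%E.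
Proof.
move=> HF hx hy H.
have nx : forall j, nnprot (upd F i (gdev x a) j) by apply: nn_upd => //; exact: nn_gdev.
have ny : forall j, nnprot (upd F i (gdev y a) j) by apply: nn_upd => //; exact: nn_gdev.
apply: (@series_cmp _ _ _ _ (size a) _ _ _ _ _ _ _ _ H).
- by move=> t; apply: Pr_ge0.
- by move=> t; apply: Pr_ge0.
- by move=> t; apply: Pr_ge0.
- by move=> t; apply: Pr_ge0.
- by move=> t ht; apply: tail_small.
- by move=> t ht; apply: pend_small.
- by move=> t ht; apply: tail_eq_pend.
- by move=> t ht; apply: tail_eq_pend.
Qed.


Lemma mix_eq K (c : 'I_K -> R) (y : 'I_K -> \bar R) (x : \bar R) b0 :
  (forall b, 0 <= c b) -> \sum_b c b = 1 -> (0 <= x)%E -> (forall b, x <= y b)%E ->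
  x = (\sum_b (c b)%:E * y b)%E -> 0 < c b0 -> y b0 = x.
Proof.
move=> c0 cs x0 xy hx cb0.
have Hlow : ((c b0)%:E * y b0 + \sum_(b | b != b0) (c b)%:E * x <= x)%E.
  have e : (\sum_b (c b)%:E * y b = (c b0)%:E * y b0 + \sum_(b | b != b0) (c b)%:E * y b)%E.
    by rewrite (bigD1 b0).
  rewrite [in X in (_ <= X)%E]hx e; apply: leeD2l.
  by apply: lee_sum => b _; apply: lee_wpmul2l; rewrite ?lee_fin.
have cs' : \sum_(b | b != b0) c b = 1 - c b0.
  by have := cs; rewrite (bigD1 b0) //= => <-; rewrite addrAC subrr add0r.
apply/le_anti; rewrite xy andbT.
move: Hlow x0; clear xy hx; case: (y b0) => [s| |]; case: x => [r| |] //=.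
- rewrite -EFinM; under eq_bigr do rewrite -EFinM.
  rewrite sumEFin -EFinD !lee_fin -mulr_suml cs' => H _; nra.
- by move=> _ _; rewrite leey.
- rewrite mulry gtr0_sg // mul1e; under eq_bigr do rewrite -EFinM.
  by rewrite sumEFin addye.
by move=> _ _; rewrite leNye.
Qed.

Lemma consistent_pp F i h : (forall j, nnprot (F j)) -> consistent F i h -> 0 < pp (F i) h.
Proof.
move=> HF /Pr_pos_ex [w [/andP [hp /eqP hw] hpos]].
have hw' : tval (w i) = h := hw.
have e : weight F w = Rest F w i * pp (F i) h.
  rewrite -{1}(upd_id F i) weight_upd; congr (_ * _); rewrite /Pi /pp.
  apply: eq_bigr => s _; rewrite /pfac (pend_le _ hp); last first.
    by rewrite -ltnS (ltn_predK (ltn_ord s)).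
  by rewrite /act hw'.
rewrite e in hpos; rewrite lt_neqAle pp_ge0 // andbT.
by apply: contraTneq hpos => <-; rewrite mulr0 ltxx.
Qed.

Lemma cons_hist F i a : (forall j, nnprot (F j)) -> 0 < Pr_hist F i a -> consistent F i a.
Proof.
move=> HF H; apply: (lt_le_trans H); apply: Pr_mono => // w /andP[hp hw].
by rewrite hw (pend_le (leq_pred _) hp).
Qed.

End Aux.

Unset Implicit Arguments.

Theorem lemma2 (R : realType) (n k : nat) (F : 'I_n -> prot R k)
    (hF : forall i, valid_prot (F i)) :
  equilibrium F <->
  (forall i : 'I_n,
     (forall g r : prot R k, inG F i g -> inG F i r ->
        cost (upd F i g) i = cost (upd F i r) i /\
        cost (upd F i r) i = cost F i) /\
     (forall g r : prot R k, inG F i g -> valid_prot r -> ~ inG F i r ->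
        (cost (upd F i g) i <= cost (upd F i r) i)%E)).
Proof.
have HF : forall j, nnprot (F j) by move=> j; exact: valid_nn.
split.
- move=> HE i.
  have H0 g : valid_prot g -> (cost F i <= cost (upd F i g) i)%E.
    move=> hg; have := HE i [::] _ g hg; rewrite !condcost_nil; apply.
      by rewrite Pr_hist_nil ltr01.
    by [].
  have HQ h : 0 < pp (F i) h -> cost (upd F i (gdev (F i) h)) i = cost F i.
    elim/last_ind: h => [_ | h b IH]; first by rewrite gdev_nil upd_id.
    rewrite pp_rcons => hpos.
    have hp1 : 0 < pp (F i) h.
      rewrite lt_neqAle pp_ge0 // andbT; apply: contraTneq hpos => <-.
      by rewrite mul0r ltxx.
    have hp2 : 0 < F i h b.
      rewrite lt_neqAle HF andbT; apply: contraTneq hpos => <-.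
      by rewrite mulr0 ltxx.
    have := IH hp1; rewrite cost_mix // => Hmix.
    apply: (@mix_eq R k.+1 (F i h)
      (fun b' => cost (upd F i (gdev (F i) (rcons h b'))) i) (cost F i) b _ _ _ _ _ hp2).
    + by move=> b'; apply: HF.
    + by case: (hF i h).
    + by rewrite /cost; apply: nneseries_ge0 => t _ _; rewrite lee_fin Pr_ge0.
    + by move=> b'; apply: H0; apply: valid_gdev.
    + by rewrite -Hmix.
  split.
  + move=> g r [h1 [s1 [c1 ->]]] [h2 [s2 [c2 ->]]].
    by rewrite !HQ //; apply: consistent_pp.
  + move=> g r [h1 [s1 [c1 ->]]] hr _.
    by rewrite HQ; [exact: H0 | exact: consistent_pp].
- move=> H i a hP g hg hag.
  have [Ha Hb] := H i.
  have [bf hbf] : {bf : 'I_n -> 'I_k.+1 & forall j, 0 < F j [::] (bf j)}.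
    apply: (@choice 'I_n 'I_k.+1 (fun j b => 0 < F j [::] b)) => j; case: (pselect (exists b, 0 < F j [::] b)) => // hn.
    exfalso; have : \sum_(b < k.+1) F j [::] b <= 0.
      apply: (@le_trans _ _ (\sum_(b < k.+1) (0:R))); last by rewrite big1.
      apply: ler_sum => b _; rewrite leNgt; apply/negP => hb; apply: hn; by exists b.
    by case: (hF j [::]) => _ ->; rewrite ler10.
  pose w0 : traj n k 1 := [ffun j => [tuple bf j]].
  have hg0 : inG F i (gdev (F i) [:: bf i]).
    exists [:: bf i]; split => //; split => //.
    rewrite /consistent; apply: (lt_le_trans _ (@Pr_ge_weight _ _ _ _ _ _ w0 HF _)).
      rewrite /weight big_ord1; apply: prodr_gt0 => j _.
      have -> : pendb w0 j 0 by apply/forallP => -[].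
      by rewrite /act ffunE /=.
    apply/andP; split; first by apply/forallP => -[].
    by rewrite /w0 ffunE.
  have Key g' : valid_prot g' -> (cost F i <= cost (upd F i g') i)%E.
    move=> hg'; have e0 := (Ha _ _ hg0 hg0).2.
    case: (pselect (inG F i g')) => hin; first by rewrite (Ha _ _ hg0 hin).2.
    by rewrite -e0; exact: Hb _ _ hg0 hg' hin.
  have eF := @condcost_rep R n k F i (F i) a HF (HF i).
  rewrite upd_id in eF.
  rewrite eF condcost_rep //; last exact: valid_nn.
  rewrite hist_agree // (pp_agree hag).
  apply: lee_wpmul2l.
    by rewrite lee_fin mulr_ge0 // ?invr_ge0 ?pp_ge0 // Pr_ge0.
  apply: S_cost => //; first exact: valid_nn.
  clear eF; case: a hP hag => [|b a'] hP hag.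
    by rewrite !gdev_nil upd_id; apply: Key.
  have hin : inG F i (gdev (F i) (b :: a')).
    exists (b :: a'); split => //; split => //; exact: cons_hist.
  by rewrite (Ha _ _ hin hin).2; apply: Key; apply: valid_gdev.
Qed.
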